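(* For every $p\ge2$ and every integer $1\le i\le N-1$, the dimensions of consecutive models of $\mathcal M_1$ satisfy $d_{m_{i+1}}\le 2\,d_{m_i}$.
   Context: Let $p\ge 2$ be an integer. $\Lambda=\{0,\dots,p-1\}^2$ is the $p\times p$ discrete torus; indices of $p\times p$ arrays are taken modulo $p$. $\Theta$ is the vector space of real $p\times p$ arrays $\theta$ indexed by $\Lambda$ with $\theta[0,0]=0$ and $\theta[i,j]=\theta[-i,-j]$ for all $(i,j)$. Toroidal norm: $|(i,j)|_t^2=(i\wedge(p-i))^2+(j\wedge(p-j))^2$ for $(i,j)\in\Lambda$. For $r\ge0$, $m(r)=\{(i,j)\in\Lambda\setminus\{(0,0)\}:|(i,j)|_t\le r\}$; $\mathcal M_1$ is the collection of the distinct sets $m(r)$, totally ordered by inclusion as $\emptyset=m_0\subsetneq m_1\subsetneq\dots\subsetneq m_N=\Lambda\setminus\{(0,0)\}$. For $m\in\mathcal M_1$, $\Theta_m=\{\theta\in\Theta:\theta[i,j]=0\ \forall(i,j)\notin m\}$ and $d_m=\dim\Theta_m$ (equivalently, the number of pairs $\{(i,j),(-i,-j)\}$ contained in $m$). *)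

(* Defs.v *)
From mathcomp Require Import all_boot.
Set Implicit Arguments. Unset Strict Implicit. Unset Printing Implicit Defensive.

Definition torus (p : nat) := ('I_p * 'I_p)%type.

Definition negI (p : nat) (i : 'I_p) : 'I_p :=
  Ordinal (ltn_pmod (p - i) (leq_ltn_trans (leq0n i) (ltn_ord i))).

Definition negT (p : nat) (x : torus p) : torus p := (negI x.1, negI x.2).

Definition nonzeroT (p : nat) (x : torus p) : bool :=
  ~~ ((val x.1 == 0) && (val x.2 == 0)).

Definition tnorm2 (p : nat) (x : torus p) : nat :=
  (minn (val x.1) (p - val x.1)) ^ 2 + (minn (val x.2) (p - val x.2)) ^ 2.

(* m(r) expressed through the squared radius s (s = floor(r^2)):
   {x <> 0 : |x|_t^2 <= s} *)
Definition msq (p s : nat) : {set torus p} :=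
  [set x : torus p | nonzeroT x && (tnorm2 x <= s)].

Definition inM1 (p : nat) (m : {set torus p}) : Prop :=
  exists s : nat, m = msq p s.

Definition dimM (p : nat) (m : {set torus p}) : nat :=
  #|[set [set x; negT x] | x in m]|.

(* Main.v *)
Require Import Defs.
From mathcomp Require Import all_boot.
From Stdlib Require Import Lia.
Set Implicit Arguments. Unset Strict Implicit. Unset Printing Implicit Defensive.

Ltac tocoq :=
  repeat match goal with
  | H : is_true (_ && _) |- _ => case/andP: H => ? ?
  | H : is_true (_ <= _) |- _ => move/leP in H
  | H : is_true (_ < _) |- _ => move/ltP in H
  | H : is_true (_ == _) |- _ => move/eqP in H
  | H : is_true (~~ (_ <= _)) |- _ => rewrite -ltnNge in H
  | H : is_true (~~ (_ < _)) |- _ => rewrite -leqNgt in H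
  | H : is_true (~~ (_ == _)) |- _ => move/eqP in H
  | H : (_ <= _) = false |- _ => move/negbT in H
  | H : (_ < _) = false |- _ => move/negbT in H
  | H : (_ == _) = false |- _ => move/negbT in H
  | H : context [addn ?a ?b] |- _ => rewrite -[addn a b]/(Nat.add a b) in H
  | H : context [subn ?a ?b] |- _ => rewrite -[subn a b]/(Nat.sub a b) in H
  | H : context [muln ?a ?b] |- _ => rewrite -[muln a b]/(Nat.mul a b) in H
  | H : context [expn ?a 2] |- _ => rewrite -[expn a 2]/(Nat.mul a a) in H
  | |- is_true (_ && _) => apply/andP; split
  | |- is_true (~~ (_ == _)) => apply/eqP
  | |- is_true (_ <= _) => apply/leP
  | |- is_true (_ < _) => apply/ltP
  | |- is_true (_ == _) => apply/eqP
  | |- context [addn ?a ?b] => rewrite -[addn a b]/(Nat.add a b)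
  | |- context [subn ?a ?b] => rewrite -[subn a b]/(Nat.sub a b)
  | |- context [muln ?a ?b] => rewrite -[muln a b]/(Nat.mul a b)
  | |- context [expn ?a 2] => rewrite -[expn a 2]/(Nat.mul a a)
  end.

Definition An p c := minn c (p - c).
Definition Nn p i j := An p i ^ 2 + An p j ^ 2.
Definition HbN p i j :=
  ((0 < 2*i) && (2*i < p)) || (((i == 0) || (2*i == p)) && (2*j <= p)).
Definition Gn p i j : nat * nat :=
  if 2 <= i then (i-1, j)
  else if i == 1 then (if 2*j <= p then (0,j) else if j == p-1 then (1,0) else (0, p-1-j))
  else (0, j-1).

Lemma An_le p c : 2*c <= p -> An p c = c.
Proof. move=> h; rewrite /An /minn; case: ifP => h2 //; tocoq; lia. Qed.
Lemma An_gt p c : p < 2*c -> c <= p -> An p c = p - c.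
Proof. move=> h h'; rewrite /An /minn; case: ifP => h2 //; tocoq; lia. Qed.

Lemma HbN_i p i j : HbN p i j -> 2*i <= p.
Proof. case/orP => /andP [h1 h2]; first by tocoq; lia.
case/orP: h1 => /eqP ->; by [rewrite muln0| ]. Qed.

Lemma Gn_lt p i j : 2 <= p -> i < p -> j < p -> (Gn p i j).1 < p /\ (Gn p i j).2 < p.
Proof.
move=> hp hi hj; rewrite /Gn; case: ifP => h1; first by split=> //=; tocoq; lia.
case: ifP => h2; last by split=> /=; tocoq; lia.
case: ifP => h3; first by split=> /=; tocoq; lia.
case: ifP => h4; by split=> /=; tocoq; lia.
Qed.

Lemma L1 p i j : 2 <= p -> i < p -> j < p -> HbN p i j -> 2 <= Nn p i j ->
  [&& HbN p (Gn p i j).1 (Gn p i j).2,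
      ~~ (((Gn p i j).1 == 0) && ((Gn p i j).2 == 0)) &
      Nn p (Gn p i j).1 (Gn p i j).2 < Nn p i j].
Proof.
move=> hp hi hj hH hN; have hi2 := HbN_i hH.
move: hN; rewrite /Nn (An_le hi2) /Gn.
case: ifP => h1 /=.
  rewrite (@An_le p (i-1)); last by tocoq; lia.
  move=> hN; apply/and3P; split.
  - by apply/orP; left; tocoq; lia.
  - by rewrite negb_and; apply/orP; left; tocoq; lia.
  - tocoq; nia.
case: ifP => h2.
  move/eqP: h2 => h2; subst i.
  case: ifP => h3 /=.
    rewrite (An_le h3) (@An_le p 0) //; move=> hN.
    apply/and3P; split.
    - by apply/orP; right; rewrite eqxx h3.
    - by tocoq; nia.
    - by tocoq; nia.
  rewrite (@An_gt p j); [|by tocoq; lia|by tocoq; lia].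
  case: ifP => h4 /=.
    move/eqP: h4 => h4; subst j.
    rewrite (@An_le p 1); last by tocoq; lia.
    rewrite (@An_le p 0) //; move=> hN.
    apply/andP; split.
    - by apply/orP; left; tocoq; lia.
    - by tocoq; nia.
  rewrite (@An_le p 0) // (@An_le p (p-1-j)); last by tocoq; lia.
  move=> hN; apply/and3P; split.
  - by apply/orP; right; rewrite eqxx /=; tocoq; lia.
  - by tocoq; nia.
  - by tocoq; nia.
have hi0 : i = 0 by tocoq; lia.
subst i.
have hj2 : 2 * j <= p.
  by case/orP: hH => /andP [a b] //; rewrite muln0 in a.
rewrite (An_le hj2) (@An_le p 0) // (@An_le p (j-1)); last by tocoq; lia.
move=> hN; apply/and3P; split.
- by apply/orP; right; rewrite eqxx /=; tocoq; lia.
- by rewrite /=; tocoq; nia.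
- by rewrite /=; tocoq; nia.
Qed.

Lemma HbN_P p i j : HbN p i j ->
  ((0 < 2*i)%coq_nat /\ (2*i < p)%coq_nat) \/ ((i = 0 \/ 2*i = p) /\ (2*j <= p)%coq_nat).
Proof.
case/orP => /andP [h1 h2]; first by left; tocoq; lia.
right; case/orP: h1 => /eqP h1; tocoq; lia.
Qed.

Lemma An_cases p c : c <= p ->
  (An p c = c /\ (2*c <= p)%coq_nat) \/ (An p c = p - c /\ (p < 2*c)%coq_nat).
Proof.
move=> hc; case: (leqP (2*c) p) => h.
  by left; rewrite An_le //; split=> //; tocoq; lia.
by right; rewrite An_gt //; split=> //; tocoq; lia.
Qed.

Lemma L2 p i j i' j' : 2 <= p -> i < p -> j < p -> i' < p -> j' < p ->
  HbN p i j -> HbN p i' j' -> 2 <= Nn p i j -> Nn p i j = Nn p i' j' ->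
  Gn p i j = Gn p i' j' -> i = i' /\ j = j'.
Proof.
move=> hp hi hj hi' hj' hH hH'.
have hi2 := HbN_i hH; have hi2' := HbN_i hH'.
move/HbN_P: hH => hH; move/HbN_P: hH' => hH'.
rewrite /Nn (An_le hi2) (An_le hi2').
have [[-> hc]|[-> hc]] := An_cases (ltnW hj);
have [[-> hc']|[-> hc']] := An_cases (ltnW hj');
rewrite /Gn; repeat case: ifP => ?; move=> hN hE E; have e1 := f_equal fst E; have e2 := f_equal snd E; simpl in e1, e2; clear E; tocoq; split; nia.
Qed.

Lemma valneg p (i : 'I_p) : nat_of_ord (negI i) = if nat_of_ord i == 0 then 0 else p - nat_of_ord i.
Proof.
rewrite /negI /=; case: eqP => [->|h]; first by rewrite subn0 modnn.
rewrite modn_small //; have hi := ltn_ord i; tocoq; lia.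
Qed.

Lemma valnegm p (i:'I_p) : (p - i) %% p = if nat_of_ord i == 0 then 0 else p - i.
Proof. exact: valneg. Qed.

Lemma negIK p (i : 'I_p) : negI (negI i) = i.
Proof.
apply/ord_inj; rewrite !valneg; have := ltn_ord i.
case: (nat_of_ord i =P 0) => [->|h] //= hi.
case: ifP => h2; tocoq; lia.
Qed.

Lemma negTK p (x : torus p) : negT (negT x) = x.
Proof. by case: x => a b; rewrite /negT /= !negIK. Qed.

Lemma An_neg p (i : 'I_p) : An p (negI i) = An p i.
Proof.
rewrite valneg; have := ltn_ord i; case: (nat_of_ord i =P 0) => [->|h] hi //.
rewrite /An minnC; congr minn; tocoq; lia.
Qed.

Lemma tnorm2_neg p (x : torus p) : tnorm2 (negT x) = tnorm2 x.
Proof. by rewrite /tnorm2 /negT /=; rewrite -!/(An p _) !An_neg. Qed.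

Lemma nonzero_neg p (x : torus p) : nonzeroT (negT x) = nonzeroT x.
Proof.
rewrite /nonzeroT /negT /= !valnegm.
have h1 := ltn_ord x.1; have h2 := ltn_ord x.2.
case: (eqVneq (nat_of_ord x.1) 0) => e1; case: (eqVneq (nat_of_ord x.2) 0) => e2 /=.
- by [].
- by rewrite (_ : (p - x.2 == 0) = false) //; apply/negbTE; apply/eqP; move/eqP: e2; tocoq; lia.
- by rewrite (_ : (p - x.1 == 0) = false) //; apply/negbTE; apply/eqP; move/eqP: e1; tocoq; lia.
- by rewrite (_ : (p - x.1 == 0) = false) //; apply/negbTE; apply/eqP; move/eqP: e1; tocoq; lia.
Qed.

Definition Hs p : {set torus p} := [set x : torus p | HbN p x.1 x.2].

Lemma HbNP p i j : reflect
  (((0 < 2*i)%coq_nat /\ (2*i < p)%coq_nat) \/ ((i = 0 \/ 2*i = p) /\ (2*j <= p)%coq_nat))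
  (HbN p i j).
Proof.
apply: (iffP idP); first exact: HbN_P.
rewrite /HbN => h; apply/orP.
case: h => [[h1 h2]|[h1 h2]]; [left|right]; first by tocoq; lia.
apply/andP; split; last by tocoq; lia.
by case: h1 => ->; rewrite eqxx ?orbT.
Qed.

Lemma H_cover p (x : torus p) : (x \in Hs p) || (negT x \in Hs p).
Proof.
rewrite !inE /negT /= !valnegm.
have h1 := ltn_ord x.1; have h2 := ltn_ord x.2.
case: (boolP (HbN p x.1 x.2)) => //= /HbNP h; apply/HbNP.
case: (eqVneq (nat_of_ord x.1) 0) => e1; case: (eqVneq (nat_of_ord x.2) 0) => e2 /=;
  tocoq; lia.
Qed.

Lemma H_inj p (x : torus p) : x \in Hs p -> negT x \in Hs p -> negT x = x.
Proof.
case: x => a b; rewrite !inE /negT /= => h h'.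
have h1 := ltn_ord a; have h2 := ltn_ord b.
congr pair; apply/ord_inj; rewrite valneg;
move: h h'; rewrite !valnegm; repeat case: ifP => ?; move=> /HbNP h /HbNP h'; tocoq; lia.
Qed.

Definition orb_ p (x : torus p) : {set torus p} := [set x; negT x].

Lemma dim_ge p (X : {set torus p}) : #|X :&: Hs p| <= dimM X.
Proof.
rewrite /dimM -(@card_in_imset _ _ (@orb_ p) (X :&: Hs p)).
  apply: subset_leq_card; apply: imsetS; exact: subsetIl.
move=> x y /setIP [_ hx] /setIP [_ hy] e.
have : y \in orb_ x by rewrite e !inE eqxx.
rewrite !inE => /orP [/eqP -> //| /eqP ey].
have hn : negT x \in Hs p by rewrite -ey.
by rewrite ey (H_inj hx hn).
Qed.

Lemma dim_le p (X : {set torus p}) : (forall x, x \in X -> negT x \in X) ->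
  dimM X <= #|X :&: Hs p|.
Proof.
move=> hX; rewrite /dimM.
apply: (leq_trans _ (leq_imset_card (@orb_ p) _)).
apply: subset_leq_card; apply/subsetP => S /imsetP [x hx ->].
case/orP: (H_cover x) => h.
  by apply/imsetP; exists x => //; rewrite inE hx h.
apply/imsetP; exists (negT x); first by rewrite inE hX.
by rewrite /orb_ negTK setUC.
Qed.

Definition gT p (x : torus p) : torus p :=
  (insubd x.1 (Gn p x.1 x.2).1, insubd x.2 (Gn p x.1 x.2).2).

Lemma gT_val p (x : torus p) : 2 <= p ->
  nat_of_ord (gT x).1 = (Gn p x.1 x.2).1 /\ nat_of_ord (gT x).2 = (Gn p x.1 x.2).2.
Proof.
move=> hp; have [h1 h2] := Gn_lt hp (ltn_ord x.1) (ltn_ord x.2).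
by rewrite /gT /= !val_insubd h1 h2.
Qed.

Lemma nz_pos p (z : torus p) : nonzeroT z -> 0 < tnorm2 z.
Proof.
rewrite /nonzeroT /tnorm2 -!/(An p _) => h.
have [[e1 c1]|[e1 c1]] := An_cases (ltnW (ltn_ord z.1));
have [[e2 c2]|[e2 c2]] := An_cases (ltnW (ltn_ord z.2)); rewrite e1 e2;
have h1 := ltn_ord z.1; have h2 := ltn_ord z.2;
move: h; rewrite negb_and => /orP [] h;
have vE : forall i : 'I_p, \val i = nat_of_ord i by [];
rewrite ?vE in h; tocoq; nia.
Qed.

Theorem mainTheorem20 (p : nat) (hp : 2 <= p) (m m' : {set torus p}) :
  inM1 m -> inM1 m' -> m != set0 -> m \proper m' ->
  (forall m'' : {set torus p}, inM1 m'' -> ~ (m \proper m'' /\ m'' \proper m')) ->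
  dimM m' <= 2 * dimM m.
Proof.
move=> [s ->] [s' ->] hne hpr hmax.
have P1 : forall x y, x \in msq p s' -> x \notin msq p s -> nonzeroT y ->
    tnorm2 y < tnorm2 x -> y \in msq p s.
  move=> x y hx hxn hy hlt; apply/negPn/negP => hyn.
  have hsy : s < tnorm2 y by move: hyn; rewrite inE hy /= ltnNge.
  have hxs' : tnorm2 x <= s' by move: hx; rewrite inE => /andP [].
  apply: (hmax (msq p (tnorm2 y))); first by exists (tnorm2 y).
  split; apply/properP; split.
  - apply/subsetP => z; rewrite !inE => /andP [-> hz] /=.
    exact: leq_trans hz (ltnW hsy).
  - by exists y => //; rewrite inE hy leqnn.
  - apply/subsetP => z; rewrite !inE => /andP [-> hz] /=.
    exact: leq_trans hz (ltnW (leq_trans hlt hxs')).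
  - exists x => //; rewrite inE; apply/negP => /andP [_ h].
    by move: hlt; rewrite ltnNge h.
have P3 : forall x, x \in msq p s' -> x \notin msq p s -> 2 <= tnorm2 x.
  move=> x hx hxn; case/set0Pn: hne => z hz.
  move: hz hx hxn; rewrite !inE => /andP [hz hzs] /andP [hx _].
  rewrite hx /= -ltnNge => hsx.
  have h0 := nz_pos hz; tocoq; lia.
set T := (msq p s' :&: Hs p) :\: msq p s.
have P2 : forall x y, x \in T -> y \in T -> tnorm2 x = tnorm2 y.
  move=> x y /setDP [/setIP [hx _] hxn] /setDP [/setIP [hy _] hyn].
  have nx : nonzeroT x by move: (hx); rewrite inE => /andP [].
  have ny : nonzeroT y by move: (hy); rewrite inE => /andP [].
  case: (ltngtP (tnorm2 x) (tnorm2 y)) => // h.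
    by rewrite (P1 y x) in hxn.
  by rewrite (P1 x y) in hyn.
have c1 : #|(msq p s' :&: Hs p) :&: msq p s| <= #|msq p s :&: Hs p|.
  apply: subset_leq_card; apply/subsetP => z /setIP [/setIP [_ hz] hm].
  by apply/setIP.
have HT : forall x, x \in T -> [/\ x \in msq p s', x \notin msq p s,
      HbN p x.1 x.2 & 2 <= Nn p x.1 x.2].
  move=> x /setDP [/setIP [hx hH] hxn]; split => //.
    by move: hH; rewrite inE.
  exact: (P3 x hx hxn).
have c2 : #|T| <= #|msq p s :&: Hs p|.
  rewrite -(@card_in_imset _ _ (@gT p) T).
    apply: subset_leq_card; apply/subsetP => w /imsetP [x hxT ->].
    have [hx hxn hH h2] := HT x hxT.
    have := L1 hp (ltn_ord x.1) (ltn_ord x.2) hH h2.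
    case/and3P => hg nz lt.
    have [g1 g2] := gT_val x hp.
    apply/setIP; split; last by rewrite inE g1 g2.
    apply: (P1 x) => //.
      by rewrite /nonzeroT; move: nz; rewrite -g1 -g2.
    have -> : tnorm2 (gT x) = Nn p (Gn p x.1 x.2).1 (Gn p x.1 x.2).2 by rewrite -g1 -g2.
    exact: lt.
  move=> x y hxT hyT e.
  have [hx hxn hH h2] := HT x hxT.
  have [hy hyn hH' h2'] := HT y hyT.
  have [g1 g2] := gT_val x hp; have [g1' g2'] := gT_val y hp.
  have ee : Gn p x.1 x.2 = Gn p y.1 y.2.
    rewrite [Gn p x.1 x.2]surjective_pairing [Gn p y.1 y.2]surjective_pairing.
    by rewrite -g1 -g2 -g1' -g2' e.
  have [e1 e2] := L2 hp (ltn_ord x.1) (ltn_ord x.2) (ltn_ord y.1) (ltn_ord y.2)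
    hH hH' h2 (P2 x y hxT hyT) ee.
  move: e1 e2; case: (x) => a b; case: (y) => c d /= e1 e2.
  by congr pair; apply: ord_inj.
apply: (leq_trans (dim_le _)).
  move=> x; rewrite !inE nonzero_neg tnorm2_neg; exact.
rewrite -(cardsID (msq p s) (msq p s' :&: Hs p)) -/T.
apply: leq_trans (leq_add c1 c2) _.
by rewrite addnn -mul2n leq_mul2l dim_ge orbT.
Qed.
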